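(* Let $M,N,p\ge1$ and $(a,b)\in\mathbb Z_M^p\times\mathbb Z_N^p$ be such that the multisets $\{(a_y,b_y)\}_{y=1}^p$ and $\{(a_y,b_{y+1})\}_{y=1}^p$ are different. For $r\ge1$ let $$K_p^r(a,b)=\frac{1}{M^r}\#\{i\in\mathbb Z_M^r:\ (E_x)\text{ holds for all }x=1,\dots,r\}.$$ Then $K_p^r(a,b)\to0$ as $r\to\infty$.
   Context: Cyclic conventions: $i_{r+1}=i_1$, $b_{p+1}=b_1$. For $x\in\{1,\dots,r\}$, condition $(E_x)$ says that the multisets $\{(i_x+a_y,b_y),(i_{x+1}+a_y,b_{y+1}):y=1,\dots,p\}$ and $\{(i_x+a_y,b_{y+1}),(i_{x+1}+a_y,b_y):y=1,\dots,p\}$ of elements of $\mathbb Z_M\times\mathbb Z_N$ (counted with multiplicity) coincide. *)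

(* Defs.v *)
From HB Require Import structures.
From mathcomp Require Import all_boot all_order all_algebra.
Set Implicit Arguments. Unset Strict Implicit. Unset Printing Implicit Defensive.
Import Order.TTheory GRing.Theory Num.Theory.

(* Z_M is represented by 'I_M (values 0..M-1), addition is mod M;
   elements of Z_M x Z_N are pairs of nats (canonical residues).
   Cyclic successor on indices 'I_p / 'I_r is ordS (y+1 mod p). *)

Definition msetL (M N p r : nat) (a : 'I_p -> 'I_M) (b : 'I_p -> 'I_N)
  (i : 'I_r -> 'I_M) (x : 'I_r) : seq (nat * nat) :=
  [seq (((i x + a y) %% M)%N, val (b y)) | y : 'I_p] ++
  [seq (((i (ordS x) + a y) %% M)%N, val (b (ordS y))) | y : 'I_p].

Definition msetR (M N p r : nat) (a : 'I_p -> 'I_M) (b : 'I_p -> 'I_N)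
  (i : 'I_r -> 'I_M) (x : 'I_r) : seq (nat * nat) :=
  [seq (((i x + a y) %% M)%N, val (b (ordS y))) | y : 'I_p] ++
  [seq (((i (ordS x) + a y) %% M)%N, val (b y)) | y : 'I_p].

Definition condE (M N p r : nat) (a : 'I_p -> 'I_M) (b : 'I_p -> 'I_N)
  (i : 'I_r -> 'I_M) (x : 'I_r) : bool :=
  perm_eq (msetL a b i x) (msetR a b i x).

Definition Kpr (M N p : nat) (a : 'I_p -> 'I_M) (b : 'I_p -> 'I_N) (r : nat) : rat :=
  (#|[set i : {ffun 'I_r -> 'I_M} | [forall x : 'I_r, condE a b i x]]|%:R
   / (M ^ r)%N%:R)%R.

(* Main.v *)
Require Import Defs.
From HB Require Import structures.
From mathcomp Require Import all_boot all_order all_algebra.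
From mathcomp Require Import zify.
Import Order.TTheory GRing.Theory Num.Theory.
Set Implicit Arguments. Unset Strict Implicit.

Lemma count_seqI (T : eqType) p (P : pred T) (f : 'I_p -> T) :
  count P [seq f y | y : 'I_p] = \sum_(y : 'I_p) P (f y).
Proof.
rewrite count_map -sum1_count big_mkcond /=.
rewrite -big_enum /=.
by apply: eq_bigr => y _; case: (P (f y)).
Qed.

Lemma mod_one M a c : a < M -> c < M ->
  \sum_(u : 'I_M) ((u + a) %% M == c : nat) = 1.
Proof.
move=> aM cM.
have hM : 0 < M by lia.
pose us := if a <= c then c - a else c + M - a.
have usM : us < M by rewrite /us; case: ifP; lia.
rewrite (bigD1 (Ordinal usM)) //= big1 ?addn0.
  rewrite /us; case: ifP => h.
    by rewrite subnK // modn_small ?eqxx.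
  have -> : c + M - a + a = c + M by lia.
  by rewrite modnDr modn_small ?eqxx.
move=> u hu; apply/eqP; rewrite eqb0; apply/negP => /eqP E.
move: hu => /eqP; apply; apply/val_inj => /=.
have uM := ltn_ord u.
case: (ltnP (u + a) M) => h.
  rewrite modn_small // in E; rewrite /us; case: ifP; lia.
have E2 : (u + a) %% M = u + a - M.
  have -> : u + a = (u + a - M) + M by lia.
  by rewrite modnDr modn_small; lia.
rewrite E2 in E; rewrite /us; case: ifP; lia.
Qed.
Definition Lseq M N p (a : 'I_p -> 'I_M) (b : 'I_p -> 'I_N) (u v : nat) :=
  [seq ((u + a y) %% M, val (b y)) | y : 'I_p] ++
  [seq ((v + a y) %% M, val (b (ordS y))) | y : 'I_p].
Definition Rseq M N p (a : 'I_p -> 'I_M) (b : 'I_p -> 'I_N) (u v : nat) :=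
  [seq ((u + a y) %% M, val (b (ordS y))) | y : 'I_p] ++
  [seq ((v + a y) %% M, val (b y)) | y : 'I_p].
Definition good M N p (a : 'I_p -> 'I_M) (b : 'I_p -> 'I_N) (u v : nat) :=
  perm_eq (Lseq a b u v) (Rseq a b u v).

Lemma sumu M a c (B : bool) : a < M -> c < M ->
  \sum_(u : 'I_M) ((((u + a) %% M == c) && B) : nat) = B.
Proof.
move=> aM cM; case: B.
  by rewrite -[RHS](mod_one aM cM); apply: eq_bigr => u _; rewrite andbT.
by rewrite big1 // => u _; rewrite andbF.
Qed.

Lemma good_perm M N p (a : 'I_p -> 'I_M) (b : 'I_p -> 'I_N) : 0 < M ->
  (forall u v : 'I_M, good a b u v) ->
  perm_eq [seq (val (a y), val (b y)) | y : 'I_p]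
          [seq (val (a y), val (b (ordS y))) | y : 'I_p].
Proof.
move=> hM H.
apply/allP => -[c t] _; apply/eqP.
rewrite !count_seqI.
have [cM|cM] := ltnP c M; last first.
  by rewrite !big1 // => y _; rewrite /= xpair_eqE (_ : (val (a y) == c) = false) //;
    apply/negbTE; rewrite neq_ltn; apply/orP; left; exact: leq_trans (ltn_ord (a y)) cM.
pose v0 := Ordinal hM.
have S : \sum_(u : 'I_M) (\sum_(y : 'I_p) ((((u + a y) %% M == c) && (val (b y) == t)) : nat)
            + \sum_(y : 'I_p) (((val (a y) == c) && (val (b (ordS y)) == t)) : nat))
       = \sum_(u : 'I_M) (\sum_(y : 'I_p) ((((u + a y) %% M == c) && (val (b (ordS y)) == t)) : nat)
            + \sum_(y : 'I_p) (((val (a y) == c) && (val (b y) == t)) : nat)).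
  apply: eq_bigr => u _.
  have := permP (H u v0) (pred1 (c, t)); rewrite /Lseq /Rseq !count_cat !count_seqI.
  congr (_ + _ = _ + _); apply: eq_bigr => y _;
    by rewrite /= xpair_eqE ?add0n ?modn_small.
rewrite !big_split /= !sum_nat_const !card_ord in S.
rewrite (exchange_big_dep xpredT) //= in S.
rewrite [X in _ = X + _]exchange_big /= in S.
rewrite [X in X + _ = _](eq_bigr (fun j : 'I_p => (val (b j) == t : nat))) in S; last by move=> j _; exact: sumu _ (ltn_ord _) cM.
rewrite [X in _ = X + _](eq_bigr (fun j : 'I_p => (val (b (ordS j)) == t : nat))) in S; last by move=> j _; exact: sumu _ (ltn_ord _) cM.
rewrite [X in X + _ = _](reindex_inj (@ordS_inj p)) /= in S.
move/eqP: S; rewrite eqn_add2l eqn_pmul2l // => /eqP S.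
transitivity (\sum_(y < p) (((val (a y) == c) && (val (b y) == t)) : nat)).
  by apply: eq_bigr => y _; rewrite /= xpair_eqE.
rewrite -S; apply: eq_bigr => y _; by rewrite /= xpair_eqE.
Qed.
Lemma ev_lt r (j : 'I_(r./2)) : j.*2 < r. Proof. have := ltn_ord j; lia. Qed.
Lemma od_lt r (j : 'I_(r./2)) : j.*2.+1 < r. Proof. have := ltn_ord j; lia. Qed.
Lemma tl_lt r (j : 'I_(r - (r./2).*2)) : (r./2).*2 + j < r. Proof. have := ltn_ord j; lia. Qed.

Definition psi (T : finType) r (i : {ffun 'I_r -> T}) :=
  ([ffun j : 'I_(r./2) => (i (Ordinal (ev_lt j)), i (Ordinal (od_lt j)))],
   [ffun j : 'I_(r - (r./2).*2) => i (Ordinal (tl_lt j))]).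

Lemma psi_inj (T : finType) r : injective (@psi T r).
Proof.
move=> i1 i2 /eqP; rewrite xpair_eqE => /andP [/eqP E1 /eqP E2]; apply/ffunP => x.
have [hx|hx] := ltnP x (r./2).*2.
  have hj : x./2 < r./2 by lia.
  move/ffunP: E1 => /(_ (Ordinal hj)); rewrite !ffunE => -[e1 e2].
  case: (boolP (odd x)) => ox.
    by have -> : x = Ordinal (od_lt (Ordinal hj)) by apply: val_inj => /=; lia.
  by have -> : x = Ordinal (ev_lt (Ordinal hj)) by apply: val_inj => /=; lia.
have hj : x - (r./2).*2 < r - (r./2).*2 by have := ltn_ord x; lia.
move/ffunP: E2 => /(_ (Ordinal hj)); rewrite !ffunE.
move=> e.
have ex : Ordinal (tl_lt (Ordinal hj)) = x by apply: val_inj => /=; have := ltn_ord x; lia.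
by rewrite -ex.
Qed.

Lemma card_pairs (T : finType) r (w : T * T) (S : {set {ffun 'I_r -> T}}) :
  (forall i, i \in S -> forall j (h1 : j.*2 < r) (h2 : j.*2.+1 < r),
      (i (Ordinal h1), i (Ordinal h2)) != w) ->
  #|S| <= (#|T| * #|T|).-1 ^ (r./2) * #|T| ^ (r - (r./2).*2).
Proof.
move=> HS.
rewrite -(card_imset _ (@psi_inj T r)).
pose A := [set f : {ffun 'I_(r./2) -> T * T} | f \in ffun_on (predC1 w)].
have sub : @psi T r @: S \subset setX A setT.
  apply/subsetP => _ /imsetP [i iS ->].
  rewrite inE /= in_setT andbT inE; apply/ffun_onP => j; rewrite ffunE inE.
  exact: HS.
apply: leq_trans (subset_leq_card sub) _.
rewrite cardsX cardsT card_ffun card_ord /A cardsE card_ffun_on card_ord cardC1 card_prod.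
by [].
Qed.
Lemma powb B k : B ^ k * k <= B * (B + 1) ^ k /\ B ^ k <= (B + 1) ^ k.
Proof.
elim: k => [|k [IH1 IH2]]; first by rewrite !expn0.
rewrite !expnS; split; last by apply: leq_mul => //; lia.
nia.
Qed.

Lemma condE_good M N p (a : 'I_p -> 'I_M) (b : 'I_p -> 'I_N) r (i : 'I_r -> 'I_M) x :
  condE a b i x = good a b (i x) (i (ordS x)).
Proof. by []. Qed.

Unset Implicit Arguments.

Theorem proposition5p3 (M N p : nat) (a : 'I_p -> 'I_M) (b : 'I_p -> 'I_N) :
  (0 < M)%N -> (0 < N)%N -> (0 < p)%N ->
  ~~ perm_eq [seq (val (a y), val (b y)) | y : 'I_p]
             [seq (val (a y), val (b (ordS y))) | y : 'I_p] ->
  forall eps : rat, (0 < eps)%R ->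
    exists R : nat, forall r : nat, (R <= r)%N -> (Kpr a b r < eps)%R.
Proof.
move=> hM hN hp hperm eps heps.
have [u0 [v0 bad]] : exists u0 v0 : 'I_M, ~~ good a b u0 v0.
  case: (boolP [exists u : 'I_M, exists v : 'I_M, ~~ good a b u v]).
    by case/existsP => u /existsP [v h]; exists u, v.
  move/existsPn => H; exfalso.
  apply: (negP hperm); apply: good_perm hM _ => u v.
  by move/existsPn: (H u) => /(_ v); rewrite negbK.
pose B := (M * M).-1.
have hq : (0 <= B%:R / eps)%R by apply: divr_ge0 => //; exact: ltW.
have hK := archi_boundP hq.
exists (Num.Def.archi_bound (B%:R / eps)).+1.*2 => r hr.
set K := Num.Def.archi_bound _ in hK hr.
set k := r./2.
have hk : (K.+1 <= k)%N by rewrite /k; lia.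
set S := [set i : {ffun 'I_r -> 'I_M} | [forall x, condE a b i x]].
have card : (#|S| <= B ^ k * M ^ (r - k.*2))%N.
  have := @card_pairs _ r (u0, v0) S; rewrite card_ord; apply.
  move=> i; rewrite inE => /forallP Hi j h1 h2.
  have := Hi (Ordinal h1); rewrite condE_good.
  have -> : ordS (Ordinal h1) = Ordinal h2 by apply: val_inj => /=; rewrite modn_small.
  move=> G; apply/eqP => -[e1 e2]; rewrite e1 e2 in G.
  by rewrite G in bad.
have Mr : M ^ r = (B + 1) ^ k * M ^ (r - k.*2).
  have -> : B + 1 = M ^ 2 by rewrite /B; rewrite expnS expn1; have := hM; nia.
  rewrite -expnM -expnD; congr (M ^ _); rewrite /k; lia.
have nat1 : (#|S| * k <= B * M ^ r)%N.
  apply: leq_trans (leq_mul card (leqnn k)) _.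
  by rewrite Mr mulnAC mulnA leq_mul2r (proj1 (powb B k)) orbT.
rewrite /Kpr -/S.
have mpos : (0 < (M ^ r)%:R :> rat)%R by rewrite ltr0n expn_gt0 hM.
have kpos : (0 < k%:R :> rat)%R by rewrite ltr0n; lia.
rewrite ltr_pdivrMr // -(ltr_pM2r kpos).
apply: (le_lt_trans (y := ((B * M ^ r)%:R)%R)).
  by rewrite -natrM ler_nat.
rewrite natrM [X in (_ < X)%R]mulrAC ltr_pM2r //.
rewrite ltr_pdivrMr // in hK.
apply: (lt_le_trans hK); rewrite mulrC ler_pM2l // ler_nat; lia.
Qed.
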